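(* Let $f:[0,\infty)\to[0,\infty)$ be continuously differentiable with $f>0$ on $[t_0,\infty)$ for some $t_0\ge0$ and $f\in C^2([t_0,\infty))$, let $g=\log f$ on $[t_0,\infty)$, and assume condition (H1) of the context with $q>1$ (and corresponding $p$). Let $(s_n),(t_n)\subset(0,\infty)$ and $x\in[0,1]$ satisfy $s_n<t_n$ for all $n$, $s_n\to\infty$ and $s_n/t_n\to x$. Then $$\lim_{n\to\infty}\frac{g(s_n)}{g(t_n)}=x^p=\lim_{n\to\infty}\left(\frac{g'(s_n)}{g'(t_n)}\right)^q.$$
   Context: Condition (H1): (i) $g'(t)>0$ and $g''(t)>0$ for all $t\ge t_0$, and there is a pair $(q,p)$ with either $q=1$ and $p\in(0,\infty]$, or $q\in(1,\infty)$ and $p\in(0,\infty)$, such that $\lim_{t\to\infty}\frac{g'(t)^2}{g(t)g''(t)}=q$ and $\lim_{t\to\infty}\frac{tg'(t)}{g(t)}=p$; (ii) if $q=1$, then $tg'(t)/g(t)$ is nondecreasing on $[t_0,\infty)$ and there exist $k\in\mathbb{N}$ and $\hat g\in C^2([t_0,\infty))$ with $f=\exp_k\circ\hat g$ and $\hat g'/\hat g$ nonincreasing on $[t_0,\infty)$. *)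

(* Defs.v *)
From Stdlib Require Import Reals Lra.
From Coquelicot Require Import Coquelicot.
Open Scope R_scope.

Definition deriv_from (h h' : R -> R) (a : R) : Prop :=
  (forall t, a < t -> is_derive h t (h' t)) /\
  filterlim (fun u => (h u - h a) / (u - a)) (at_right a) (locally (h' a)).

Definition cont_from (h : R -> R) (a : R) : Prop :=
  (forall t, a < t -> continuous h t) /\
  filterlim h (at_right a) (locally (h a)).

(* Real power x^y with the convention 0^y = 0 for y <> 0 and 0^0 = 1;
   for x > 0 it is Stdlib's Rpower x y = exp (y ln x). *)
Definition rpow (x y : R) : R :=
  if Req_EM_T x 0 then (if Req_EM_T y 0 then 1 else 0) else Rpower x y.

(* Main.v *)
Require Import Defs.
From Stdlib Require Import Reals Lra.
From Coquelicot Require Import Coquelicot.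
Open Scope R_scope.

Lemma cmvt (F G F' G' : R -> R) (a b : R) : a < b ->
  (forall u, a <= u <= b -> is_derive F u (F' u)) ->
  (forall u, a <= u <= b -> is_derive G u (G' u)) ->
  exists c, a <= c <= b /\ (F b - F a) * G' c = (G b - G a) * F' c.
Proof.
  intros Hab HF HG.
  set (h := fun u => (F b - F a) * G u - (G b - G a) * F u).
  assert (Hd : forall u, a <= u <= b ->
     is_derive h u ((F b - F a) * G' u - (G b - G a) * F' u)).
  { intros u Hu. unfold h.
    apply (is_derive_minus (fun u => (F b - F a) * G u) (fun u => (G b - G a) * F u));
      apply is_derive_scal; auto. }
  destruct (MVT_gen h a b (fun u => (F b - F a) * G' u - (G b - G a) * F' u))
    as [c [Hc E]].
  - intros u Hu. rewrite Rmin_left, Rmax_right in Hu by lra. apply Hd; lra.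
  - intros u Hu. rewrite Rmin_left, Rmax_right in Hu by lra.
    apply continuity_pt_filterlim. apply (ex_derive_continuous h).
    eexists. apply Hd; lra.
  - rewrite Rmin_left, Rmax_right in Hc by lra.
    exists c. split; [lra|].
    unfold h in E.
    assert (E2 : ((F b - F a) * G' c - (G b - G a) * F' c) * (b - a) = 0) by lra.
    apply Rmult_integral in E2. destruct E2 as [E2|E2]; lra.
Qed.

Lemma transfer (h : R -> R) (l : R) (s v : nat -> R) :
  is_lim h p_infty l -> is_lim_seq s p_infty ->
  (exists N0, forall n, N0 < s n -> exists c, s n <= c /\ v n = h c) ->
  is_lim_seq v l.
Proof.
  intros Hh Hs [N0 HN]. apply is_lim_seq_spec. intros eps.
  apply is_lim_spec in Hh. destruct (Hh eps) as [M HM].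
  apply is_lim_seq_spec in Hs. destruct (Hs (Rmax M N0)) as [N HN'].
  exists N. intros n Hn. specialize (HN' n Hn).
  destruct (HN n) as [c [Hc ->]].
  - pose proof (Rmax_r M N0); lra.
  - apply HM. pose proof (Rmax_l M N0); lra.
Qed.

Definition Lx (x p : R) : Rbar :=
  if Req_EM_T x 0 then m_infty else Finite (p * ln x).

Lemma explim (u : nat -> R) (x p : R) : 0 <= x -> 0 < p ->
  is_lim_seq u (Lx x p) -> is_lim_seq (fun n => exp (u n)) (rpow x p).
Proof.
  intros Hx Hp. unfold Lx, rpow. destruct (Req_EM_T x 0) as [->|Hx0].
  - destruct (Req_EM_T p 0); [lra|]. intros Hu.
    apply (is_lim_comp_seq exp u m_infty 0); [exact is_lim_exp_m| |exact Hu].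
    exists 0%nat. intros; discriminate.
  - intros Hu. unfold Rpower.
    apply (is_lim_seq_continuous exp u (p * ln x)); [|exact Hu].
    apply derivable_continuous_pt, derivable_pt_exp.
Qed.

Lemma is_Rbar_mult_1 (l : Rbar) : is_Rbar_mult 1 l l.
Proof.
  destruct l as [y| |].
  - unfold is_Rbar_mult; simpl. rewrite Rmult_1_l. reflexivity.
  - apply is_Rbar_mult_sym, is_Rbar_mult_p_infty_pos. simpl; lra.
  - apply is_Rbar_mult_sym, is_Rbar_mult_m_infty_pos. simpl; lra.
Qed.

Lemma is_derive_ln_comp (h : R -> R) (dh u : R) : 0 < h u ->
  is_derive h u dh -> is_derive (fun v => ln (h v)) u (dh / h u).
Proof.
  intros H1 H2. exact (is_derive_comp ln h u _ _ (is_derive_ln _ H1) H2).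
Qed.

Theorem lemma2p8 (f f' f'' g' g'' : R -> R) (t0 q p x : R) (s t : nat -> R) :
  0 <= t0 ->
  (* f : [0,oo) -> [0,oo), continuously differentiable on [0,oo) *)
  (forall u, 0 <= u -> 0 <= f u) ->
  deriv_from f f' 0 -> cont_from f' 0 ->
  (* f > 0 on [t0,oo) and f in C^2([t0,oo)) *)
  (forall u, t0 <= u -> 0 < f u) ->
  deriv_from f' f'' t0 -> cont_from f'' t0 ->
  (* g = log f on [t0,oo), with derivatives g', g'' there *)
  deriv_from (fun u => ln (f u)) g' t0 ->
  deriv_from g' g'' t0 ->
  (* condition (H1) with q > 1 and p in (0,oo) *)
  (forall u, t0 <= u -> 0 < g' u /\ 0 < g'' u) ->
  1 < q -> 0 < p ->
  is_lim (fun u => (g' u) ^ 2 / (ln (f u) * g'' u)) p_infty (Finite q) ->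
  is_lim (fun u => u * g' u / ln (f u)) p_infty (Finite p) ->
  (* the sequences *)
  (forall n, 0 < s n) -> (forall n, 0 < t n) -> (forall n, s n < t n) ->
  0 <= x <= 1 ->
  is_lim_seq s p_infty ->
  is_lim_seq (fun n => s n / t n) (Finite x) ->
  is_lim_seq (fun n => ln (f (s n)) / ln (f (t n))) (Finite (rpow x p)) /\
  is_lim_seq (fun n => rpow (g' (s n) / g' (t n)) q) (Finite (rpow x p)).
Proof.
  intros H0 _ _ _ _ _ _ [Hg1 _] [Hg'1 _] Hpos Hq Hp Hlq Hlp Hs0 Ht0 Hst Hx Hsinf Hxl.
  set (g := fun u => ln (f u)) in *.
  assert (HN0 : exists N0, t0 < N0 /\ forall u, N0 <= u -> 0 < g u).
  { pose proof Hlq as Hlq'. apply is_lim_spec in Hlq'.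
    assert (Hq2 : 0 < q / 2) by lra.
    destruct (Hlq' (mkposreal _ Hq2)) as [M HM].
    exists (Rmax t0 M + 1). split; [pose proof (Rmax_l t0 M); lra|].
    intros u Hu. pose proof (Rmax_l t0 M). pose proof (Rmax_r t0 M).
    specialize (HM u ltac:(lra)). simpl in HM.
    destruct (Hpos u ltac:(lra)) as [A B].
    destruct (Rlt_or_le 0 (g u)) as [G|G]; [exact G|exfalso].
    assert (Iv : / (ln (f u) * g'' u) <= 0).
    { fold (g u). destruct (Rle_lt_or_eq_dec (g u * g'' u) 0) as [L|L].
      - nra.
      - left. apply Rinv_lt_0_compat. exact L.
      - rewrite L, Rinv_0. lra. }
    apply Rabs_def2 in HM. unfold Rdiv in HM.
    assert (0 <= g' u ^ 2) by (apply pow2_ge_0). nra. }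
  destruct HN0 as [N0 [HN0t HN0]].
  assert (Hev : eventually (fun n => N0 < s n)).
  { apply is_lim_seq_spec in Hsinf. apply Hsinf. }
  set (L := fun u => ln (g u)).
  set (a := fun n => (L (t n) - L (s n)) / (ln (t n) - ln (s n))).
  assert (Hlnst : forall n, 0 < ln (t n) - ln (s n)).
  { intros n. pose proof (ln_increasing _ _ (Hs0 n) (Hst n)). lra. }
  assert (Hder_g : forall u, N0 <= u -> is_derive g u (g' u)).
  { intros u Hu. apply Hg1. lra. }
  assert (Hder_L : forall u, N0 <= u -> is_derive L u (g' u / g u)).
  { intros u Hu. apply is_derive_ln_comp; auto. }
  assert (Ha : forall n, N0 < s n -> exists c, s n <= c /\ a n = c * g' c / ln (f c)).
  { intros n Hn.
    destruct (cmvt L ln (fun u => g' u / g u) (fun u => / u) (s n) (t n) (Hst n))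
      as [c [Hc E]].
    - intros u Hu. apply Hder_L. lra.
    - intros u Hu. apply is_derive_ln. lra.
    - exists c. split; [lra|].
      assert (gc : 0 < g c) by (apply HN0; lra).
      assert (cp : 0 < c) by lra.
      fold (g c).
      assert (E2 : L (t n) - L (s n) = c * g' c / g c * (ln (t n) - ln (s n))).
      { apply (Rmult_eq_reg_r (/ c)); [|apply Rinv_neq_0_compat; lra].
        rewrite E. field. lra. }
      unfold a. rewrite E2. field. split; [lra|]. specialize (Hlnst n). lra. }
  assert (Hapos : forall n, N0 < s n -> 0 < a n).
  { intros n Hn. destruct (Ha n Hn) as [c [Hc ->]].
    assert (0 < g c) by (apply HN0; lra).
    destruct (Hpos c ltac:(lra)).
    unfold Rdiv. apply Rmult_lt_0_compat; [apply Rmult_lt_0_compat; lra|].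
    apply Rinv_0_lt_compat. exact H. }
  assert (Halim : is_lim_seq a p).
  { apply (transfer (fun u => u * g' u / ln (f u)) p s a Hlp Hsinf).
    exists N0. exact Ha. }
  set (D := fun n => a n * ln (s n / t n)).
  assert (HD : forall n, L (s n) - L (t n) = D n).
  { intros n. unfold D. rewrite ln_div by auto. unfold a.
    field. specialize (Hlnst n). lra. }
  assert (HDlim : is_lim_seq D (Lx x p)).
  { unfold D, Lx. destruct (Req_EM_T x 0) as [->|Hx0].
    - apply (is_lim_seq_mult _ _ p m_infty).
      + exact Halim.
      + apply is_lim_seq_spec. intros M.
        apply is_lim_seq_spec in Hxl.
        assert (0 < exp M) by apply exp_pos.
        destruct (Hxl (mkposreal _ H)) as [N HN].
        exists N. intros n Hn. specialize (HN n Hn). simpl in HN.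
        rewrite Rminus_0_r in HN.
        assert (Hq0 : 0 < s n / t n).
        { unfold Rdiv. apply Rmult_lt_0_compat; auto. apply Rinv_0_lt_compat; auto. }
        rewrite Rabs_right in HN by lra.
        rewrite <- (ln_exp M). apply ln_increasing; auto.
      + apply is_Rbar_mult_sym, is_Rbar_mult_m_infty_pos. simpl; lra.
    - apply (is_lim_seq_mult _ _ p (ln x)).
      + exact Halim.
      + apply (is_lim_seq_continuous ln (fun n => s n / t n) x); [|exact Hxl].
        apply continuity_pt_filterlim, continuous_ln. lra.
      + unfold is_Rbar_mult; simpl. reflexivity. }
  split.
  - apply (is_lim_seq_ext_loc (fun n => exp (D n))).
    + eapply filter_imp; [|exact Hev]. intros n Hn. simpl.
      rewrite <- HD. unfold L. unfold Rminus. rewrite exp_plus, exp_Ropp.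
      assert (0 < g (s n)) by (apply HN0; lra).
      assert (0 < g (t n)) by (apply HN0; pose proof (Hst n); lra).
      rewrite !exp_ln by auto. reflexivity.
    + apply explim; auto; lra.
  - set (F := fun u => ln (g' u)).
    set (b := fun n => (F (t n) - F (s n)) / (L (t n) - L (s n))).
    assert (HLpos : forall n, N0 < s n -> 0 < L (t n) - L (s n)).
    { intros n Hn. assert (L (t n) - L (s n) = a n * (ln (t n) - ln (s n))).
      { unfold a. field. specialize (Hlnst n). lra. }
      rewrite H. apply Rmult_lt_0_compat; auto. }
    assert (Hb : forall n, N0 < s n -> exists c, s n <= c /\
               b n = / (g' c ^ 2 / (ln (f c) * g'' c))).
    { intros n Hn.
      destruct (cmvt F L (fun u => g'' u / g' u) (fun u => g' u / g u) (s n) (t n) (Hst n))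
        as [c [Hc E]].
      - intros u Hu. apply is_derive_ln_comp.
        + apply Hpos. lra.
        + apply Hg'1. lra.
      - intros u Hu. apply Hder_L. lra.
      - exists c. split; [lra|].
        assert (gc : 0 < g c) by (apply HN0; lra).
        destruct (Hpos c ltac:(lra)) as [A B].
        fold (g c). specialize (HLpos n Hn).
        assert (E2 : F (t n) - F (s n) = (L (t n) - L (s n)) * (g'' c / g' c) / (g' c / g c)).
        { rewrite <- E. field. lra. }
        unfold b. rewrite E2. field. lra. }
    assert (Hblim : is_lim_seq b (/ q)).
    { apply (transfer (fun u => / (g' u ^ 2 / (ln (f u) * g'' u))) (/ q) s b).
      - apply (is_lim_inv _ p_infty (Finite q)) in Hlq.
        + exact Hlq.
        + intro Hc. injection Hc. lra.
      - exact Hsinf.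
      - exists N0. exact Hb. }
    assert (Hqb : is_lim_seq (fun n => q * b n) 1).
    { pose proof (is_lim_seq_scal_l b q (/ q) Hblim) as H.
      simpl in H. rewrite Rinv_r in H by lra. exact H. }
    apply (is_lim_seq_ext_loc (fun n => exp (q * b n * D n))).
    + eapply filter_imp; [|exact Hev]. intros n Hn. simpl.
      destruct (Hpos (s n) ltac:(lra)) as [A1 _].
      destruct (Hpos (t n) ltac:(pose proof (Hst n); lra)) as [A2 _].
      assert (Hr : 0 < g' (s n) / g' (t n)).
      { unfold Rdiv. apply Rmult_lt_0_compat; auto. apply Rinv_0_lt_compat; auto. }
      unfold rpow. destruct (Req_EM_T (g' (s n) / g' (t n)) 0); [lra|].
      unfold Rpower. f_equal. rewrite ln_div by auto.
      rewrite <- HD. specialize (HLpos n Hn). unfold b, F. field. lra.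
    + apply explim; try lra.
      apply (is_lim_seq_mult _ _ 1 (Lx x p)); auto. apply is_Rbar_mult_1.
Qed.
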